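(* Let $\mu>0$, $\varepsilon>0$, and $z^0\in F$, and consider the iterates generated by Algorithm IP-FB$(z^0,\mu,\varepsilon)$ described in the context. Then: (i) at every iteration, the number of backtracking steps (reductions $\gamma_j\gets\beta\gamma_j$) is finite; (ii) at every iteration $j\geq1$, one has $z^j=\bar z^{j-1}$ and \[ q_\mu(z^j)=q_\mu(\bar z^{j-1})\leq q_\mu(z^{j-1})-\tfrac{1-\alpha}{2\gamma_{j-1}}\|\bar z^{j-1}-z^{j-1}\|^2, \] where $\gamma_{j-1}$ is the accepted stepsize of iteration $j-1$; (iii) every iterate $\bar z^j$ belongs to the sublevel set $\{z : q_\mu(z)\leq q_\mu(z^0)\}$, and $q_\mu(z^0)<\infty$.
   Context: Setting: $f:\mathbb{R}^n\to\mathbb{R}$ has locally Lipschitz continuous gradient; $g:\mathbb{R}^n\to\mathbb{R}\cup\{\infty\}$ is proper, lower semicontinuous, prox-bounded ($g+\frac{1}{2\gamma}\|\cdot\|^2$ bounded below for some $\gamma>0$; $\gamma_g\in(0,\infty]$ denotes the supremum of such $\gamma$), and continuous relative to $\operatorname{dom} g$ (whenever $\operatorname{dom} g\ni x^k\to x$, $g(x^k)\to g(x)$); $c:\mathbb{R}^n\to\mathbb{R}^m$ has locally Lipschitz continuous Jacobian. $q=f+g$, $\inf\{q(x): c(x)\le0\}\in\mathbb{R}$, $D=\{x: c(x)<0\}$, $F=\operatorname{dom} q\cap D\neq\emptyset$. The barrier $b:\mathbb{R}\to[0,\infty]$ has $\operatorname{dom} b=(-\infty,0)$, is twice continuously differentiable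 with $b'>0$ there, and $b(t)\to\infty$ as $t\to0^-$. For $\mu>0$: $f_\mu(z)=f(z)+\mu\sum_{i=1}^m b(c_i(z))$ ($=\infty$ outside $D$), $q_\mu=f_\mu+g$. $\operatorname{prox}_{\gamma g}(x)=\operatorname{argmin}_w\{g(w)+\frac{1}{2\gamma}\|w-x\|^2\}$, and $T_{\mu,\gamma}(z)=\operatorname{prox}_{\gamma g}(z-\gamma\nabla f_\mu(z))$ for $z\in D$. Algorithm IP-FB$(z^0,\mu,\varepsilon)$: inputs $z^0\in F$, $\mu>0$, $\varepsilon>0$; parameters $\gamma_0\in(0,\gamma_g)$, $\alpha,\beta\in(0,1)$. Set $j=0$ and start at step 2. Step 1 (only for $j\geq1$): set $\gamma_j\gets\gamma_{j-1}$ and $z^j\gets\bar z^{j-1}$. Step 2: compute some $\bar z^j\in T_{\mu,\gamma_j}(z^j)$. Step 3: if not all of the following hold: (a) $c(\bar z^j)<0$, (b) $q_\mu(\bar z^j)\leq q_\mu(z^j)-\frac{1-\alpha}{2\gamma_j}\|\bar z^j-z^j\|^2$, (c) $\|\nabla f_\mu(\bar z^j)-\nabla f_\mu(z^j)\|\leq\frac{\alpha}{\gamma_j}\|\bar z^j-z^j\|$, then set $\gamma_j\gets\beta\gamma_j$ and go back to Step 2. Step 4: if $\|\frac{1}{\gamma_j}(z^j-\bar z^j)-\nabla f_\mu(z^j)+\nabla f_\mu(\bar z^j)\|\leq\varepsilon$, return $\bar z^j$. Step 5: set $j\gets j+1$ and go to Step 1. *)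

(* Defs.v *)
From HB Require Import structures.
From mathcomp Require Import all_boot all_order all_algebra.
From mathcomp Require Import all_classical all_reals all_analysis.
Set Implicit Arguments. Unset Strict Implicit. Unset Printing Implicit Defensive.
Import Order.TTheory GRing.Theory Num.Theory.
Import numFieldNormedType.Exports.
Local Open Scope classical_set_scope.
Local Open Scope ring_scope.

Section IPFB.
Variables (R : realType) (n m : nat).
Local Notation V := 'rV[R]_n.

Definition enorm (v : V) : R := Num.sqrt (\sum_(i < n) (v 0 i) ^+ 2).

Definition grad (h : V -> R) (x : V) : V := \row_(i < n) ('D_(delta_mx 0 i) h x).

Definition locally_lipschitz (F : V -> V) : Prop :=
  forall x : V, exists r L : R, 0 < r /\
    forall y z : V, enorm (y - x) < r -> enorm (z - x) < r ->
      enorm (F y - F z) <= L * enorm (y - z).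

Definition smooth_LL (f : V -> R) : Prop :=
  (forall x : V, differentiable f x) /\ locally_lipschitz (grad f).

Definition strictly_feasible (c : 'I_m -> V -> R) (x : V) : Prop :=
  forall i, c i x < 0.

Definition q (f : V -> R) (g : V -> \bar R) (x : V) : \bar R := ((f x)%:E + g x)%E.

(* barrier-augmented smooth part, as a real function (only meaningful on D) *)
Definition fmuR (f : V -> R) (c : 'I_m -> V -> R) (b : R -> R) (mu : R) (z : V) : R :=
  f z + mu * \sum_(i < m) b (c i z).

Definition fmu (f : V -> R) (c : 'I_m -> V -> R) (b : R -> R) (mu : R) (z : V) : \bar R :=
  if `[< strictly_feasible c z >] then (fmuR f c b mu z)%:E else +oo%E.

Definition qmu f g c b mu (z : V) : \bar R := (fmu f c b mu z + g z)%E.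

Definition prox (g : V -> \bar R) (gam : R) (x : V) : set V :=
  [set w | forall w' : V,
     (g w + (1 / (2 * gam) * enorm (w - x) ^+ 2)%:E <=
      g w' + (1 / (2 * gam) * enorm (w' - x) ^+ 2)%:E)%E].

Definition Tmap f g c b mu (gam : R) (z : V) : set V :=
  prox g gam (z - gam *: grad (fmuR f c b mu) z).

Definition accept f g c b mu (alpha gam : R) (z zb : V) : Prop :=
  [/\ strictly_feasible c zb,
      (qmu f g c b mu zb <=
        qmu f g c b mu z - ((1 - alpha) / (2 * gam) * enorm (zb - z) ^+ 2)%:E)%E
    & enorm (grad (fmuR f c b mu) zb - grad (fmuR f c b mu) z)
        <= alpha / gam * enorm (zb - z)].

(* Steps 2-3 of one iteration (the backtracking loop), started with stepsize
   gam at the point z, terminating with accepted stepsize gam' and output zb. *)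
Inductive inner f g c b mu (alpha beta : R) : R -> V -> R -> V -> Prop :=
| inner_accept gam z zb :
    Tmap f g c b mu gam z zb -> accept f g c b mu alpha gam z zb ->
    inner f g c b mu alpha beta gam z gam zb
| inner_reject gam z zb' gam' zb :
    Tmap f g c b mu gam z zb' -> ~ accept f g c b mu alpha gam z zb' ->
    inner f g c b mu alpha beta (beta * gam) z gam' zb ->
    inner f g c b mu alpha beta gam z gam' zb.

Definition stop_test f c b mu (eps gam : R) (z zb : V) : Prop :=
  enorm (gam^-1 *: (z - zb) - grad (fmuR f c b mu) z + grad (fmuR f c b mu) zb) <= eps.

(* the stepsize with which iteration j starts: gamma_0 for j = 0, and the
   accepted stepsize gamma_{j-1} of iteration j-1 otherwise (Step 1) *)
Definition gstart (gamma0 : R) (gam : nat -> R) (j : nat) : R :=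
  if j is j'.+1 then gam j' else gamma0.

(* A run of IP-FB(z0, mu, eps) performing iterations 0, ..., N: z j, zb j and
   gam j are z^j, \bar z^j and the accepted gamma_j; iterations 0..N-1 did not
   stop at Step 4; z (N+1) := zb N is the starting point of the next
   iteration (if any). *)
Definition ipfb_run f g c b mu (eps alpha beta gamma0 : R) (z0 : V) (N : nat)
    (z zb : nat -> V) (gam : nat -> R) : Prop :=
  [/\ z 0%N = z0,
      (forall j, (j <= N)%N -> z j.+1 = zb j),
      (forall j, (j <= N)%N ->
         inner f g c b mu alpha beta (gstart gamma0 gam j) (z j) (gam j) (zb j))
    & (forall j, (j < N)%N -> ~ stop_test f c b mu eps (gam j) (z j) (zb j))].

End IPFB.

(* Main.v *)
Require Import Defs.
From HB Require Import structures.
From mathcomp Require Import all_boot all_order all_algebra.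
From mathcomp Require Import all_classical all_reals all_analysis.
From mathcomp Require Import ring lra.
Import Order.TTheory GRing.Theory Num.Theory.
Import numFieldNormedType.Exports.
Local Open Scope classical_set_scope.
Local Open Scope ring_scope.
Set Implicit Arguments. Unset Strict Implicit. Unset Printing Implicit Defensive.
Section Norms.
Variables (R : realType) (n : nat).
Local Notation V := 'rV[R]_n.
Implicit Types u v w : V.

Definition dot (u v : V) : R := \sum_(i < n) u 0 i * v 0 i.

Lemma dotC u v : dot u v = dot v u.
Proof. by apply: eq_bigr => i _; rewrite mulrC. Qed.

Lemma dotDl u v w : dot (u + v) w = dot u w + dot v w.
Proof. by rewrite /dot -big_split; apply: eq_bigr => i _; rewrite !mxE mulrDl. Qed.

Lemma dotZl a u w : dot (a *: u) w = a * dot u w.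
Proof. by rewrite /dot mulr_sumr; apply: eq_bigr => i _; rewrite !mxE mulrA. Qed.

Lemma dotNl u w : dot (- u) w = - dot u w.
Proof. by rewrite -scaleN1r dotZl mulN1r. Qed.

Lemma dotBl u v w : dot (u - v) w = dot u w - dot v w.
Proof. by rewrite dotDl dotNl. Qed.

Lemma dotDr u v w : dot w (u + v) = dot w u + dot w v.
Proof. by rewrite dotC dotDl !(dotC w). Qed.

Lemma dotZr a u w : dot w (a *: u) = a * dot w u.
Proof. by rewrite dotC dotZl dotC. Qed.

Lemma dotBr u v w : dot w (u - v) = dot w u - dot w v.
Proof. by rewrite dotC dotBl !(dotC w). Qed.

Lemma dot_ge0 u : 0 <= dot u u.
Proof. by apply: sumr_ge0 => i _; rewrite -expr2 sqr_ge0. Qed.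

Lemma enormE u : enorm u = Num.sqrt (dot u u).
Proof. by rewrite /enorm /dot; congr Num.sqrt; apply: eq_bigr => i _; rewrite expr2. Qed.

Lemma enorm_ge0 u : 0 <= enorm u.
Proof. by rewrite enormE sqrtr_ge0. Qed.

Lemma enorm_sq u : enorm u ^+ 2 = dot u u.
Proof. by rewrite enormE sqr_sqrtr // dot_ge0. Qed.

Lemma dot0_eq u : dot u u = 0 -> forall w, dot u w = 0.
Proof.
move=> h w.
have h' : forall i, u 0 i = 0.
  move=> i; have := h; rewrite /dot => /eqP; rewrite psumr_eq0; last first.
    by move=> j _; rewrite -expr2 sqr_ge0.
  by move=> /allP /(_ i (mem_index_enum _)); rewrite -expr2 sqrf_eq0 => /eqP.
by rewrite /dot big1 // => i _; rewrite h' mul0r.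
Qed.

Lemma CS2 u v : dot u v ^+ 2 <= dot u u * dot v v.
Proof.
have [hv|hv] := eqVneq (dot v v) 0.
  by rewrite dotC (@dot0_eq v hv u) hv expr0n /= mulr0.
have vp : 0 < dot v v by rewrite lt_neqAle eq_sym hv dot_ge0.
set t := dot u v / dot v v.
have h := dot_ge0 (u - t *: v).
rewrite !dotBl !dotBr !dotZl !dotZr (dotC v u) in h.
have e : dot u u - t * dot u v - (t * dot u v - t * (t * dot v v)) =
   dot u u - dot u v ^+ 2 / dot v v.
  rewrite /t; field; by rewrite hv.
rewrite e subr_ge0 ler_pdivrMr // in h.
Qed.

Lemma CS u v : `|dot u v| <= enorm u * enorm v.
Proof.
rewrite !enormE -sqrtrM ?dot_ge0 // -sqrtr_sqr ler_sqrt ?CS2 //.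
by rewrite mulr_ge0 ?dot_ge0.
Qed.

Lemma CSle u v : dot u v <= enorm u * enorm v.
Proof. exact: le_trans (ler_norm _) (CS u v). Qed.

Lemma enorm_sqD u v : enorm (u + v) ^+ 2 = enorm u ^+ 2 + 2 * dot u v + enorm v ^+ 2.
Proof. rewrite !enorm_sq dotDl !dotDr (dotC v u); ring. Qed.

Lemma enormD u v : enorm (u + v) <= enorm u + enorm v.
Proof.
rewrite -(ler_pXn2r (n:=2)) // ?nnegrE ?addr_ge0 ?enorm_ge0 //.
rewrite enorm_sqD sqrrD; have := CSle u v; lra.
Qed.

Lemma enormZ a u : enorm (a *: u) = `|a| * enorm u.
Proof.
rewrite !enormE dotZl dotZr mulrA sqrtrM ?mul_ge0 -?expr2 ?sqr_ge0 //.
by rewrite sqrtr_sqr.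
Qed.

Lemma enormN u : enorm (- u) = enorm u.
Proof. by rewrite -scaleN1r enormZ normrN normr1 mul1r. Qed.

Lemma enormB u v : enorm (u - v) = enorm (v - u).
Proof. by rewrite -enormN opprB. Qed.

Lemma enorm0 : enorm (0 : V) = 0.
Proof. by rewrite -(scale0r 0) enormZ normr0 mul0r. Qed.

Lemma enorm_sum (I : Type) (r : seq I) (F : I -> V) :
  enorm (\sum_(i <- r) F i) <= \sum_(i <- r) enorm (F i).
Proof.
elim: r => [|x r IH]; first by rewrite !big_nil enorm0.
rewrite !big_cons; apply: le_trans (enormD _ _) _; exact: lerD.
Qed.

End Norms.
Arguments dot {R n}.
Section Calc.
Variables (R : realType) (n : nat).
Local Notation V := 'rV[R]_n.
Implicit Types u v w d z y : V.

Lemma line_fun (h : V -> R) d z t :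
  (fun s : R => s^-1 *: (((fun s : R => h (s *: d + z)) \o shift t) (s *: 1) - h (t *: d + z))) =
  (fun s : R => s^-1 *: ((h \o shift (t *: d + z)) (s *: d) - h (t *: d + z))).
Proof.
apply/funext => s /=; rewrite [s *: 1]mulr1 scalerDl addrA //.
Qed.

Lemma line_derivable (h : V -> R) d z t :
  derivable h (t *: d + z) d -> derivable (fun s : R => h (s *: d + z)) t 1.
Proof. by rewrite /derivable line_fun. Qed.

Lemma line_derive (h : V -> R) d z t :
  'D_1 (fun s : R => h (s *: d + z)) t = 'D_d h (t *: d + z).
Proof. by rewrite /derive line_fun. Qed.

Lemma derive_grad (h : V -> R) y d :
  differentiable h y -> 'D_d h y = dot (grad h y) d.
Proof.
move=> dh; rewrite deriveE // {1}(row_sum_delta d) linear_sum /dot.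
apply: eq_bigr => i _; rewrite linearZ /= mxE -deriveE //; exact: mulrC.
Qed.

Lemma taylor1 (h : V -> R) z r L :
  0 <= L ->
  (forall y, enorm (y - z) < r -> differentiable h y) ->
  (forall y, enorm (y - z) < r -> enorm (grad h y - grad h z) <= L * enorm (y - z)) ->
  forall y, enorm (y - z) < r ->
    `|h y - h z - dot (grad h z) (y - z)| <= L * enorm (y - z) ^+ 2.
Proof.
move=> L0 hd hc y yr; set d := y - z.
pose phi := fun t : R => h (t *: d + z).
have inb : forall t : R, 0 <= t <= 1 -> enorm ((t *: d + z) - z) < r.
  move=> t /andP[t0 t1]; rewrite addrK enormZ ger0_norm //.
  apply: le_lt_trans yr; rewrite -/d -[X in _ <= X]mul1r ler_wpM2r // ?enorm_ge0 //.
have der : forall t : R, 0 <= t <= 1 -> derivable phi t 1.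
  move=> t tb; apply: line_derivable; apply: diff_derivable; exact: hd (inb t tb).
have [t t01 Ht] : exists2 t, t \in `]0, 1[%R & phi 1 - phi 0 = 'D_1 phi t * (1 - 0).
  apply: MVT => //.
    move=> x; rewrite in_itv /= => /andP[x0 x1]; apply: derivableP.
    by apply: der; rewrite !ltW.
  apply: derivable_within_continuous => x; rewrite in_itv /= => xx.
  exact: der.
move: t01; rewrite in_itv /= => /andP[t0 t1].
have tb : 0 <= t <= 1 by rewrite !ltW.
move: Ht; rewrite /phi scale1r scale0r add0r subr0 mulr1 -/d.
have -> : y = d + z by rewrite /d subrK.
move=> ->; rewrite line_derive derive_grad; last exact: hd (inb _ tb).
rewrite -dotBl; apply: (le_trans (CS _ _)).
rewrite expr2 mulrA ler_wpM2r ?enorm_ge0 //; apply: (le_trans (hc _ (inb _ tb))).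
rewrite addrK enormZ ger0_norm; last exact: ltW.
rewrite mulrA ler_wpM2r ?enorm_ge0 //.
by rewrite -[X in _ <= X]mulr1 ler_wpM2l // ltW.
Qed.

End Calc.
Section Local1.
Variable R : realType.

Lemma cont_bound (F : R -> R) t0 : {for t0, continuous F} ->
  exists2 d : R, 0 < d & forall t, `|t0 - t| < d -> `|F t| <= `|F t0| + 1.
Proof.
move=> cF.
have H := @cvgr_dist_lt _ _ _ _ _ F (F t0) cF 1 ltr01.
have [d /= d0 Hd] := iffLR (nbhs_normP _ _) (H _).
exists d => // t tt.
have h2 : `|F t0 - F t| < 1 by apply: Hd.
rewrite -[F t](subrK (F t0)); apply: le_trans (ler_normD _ _) _.
by rewrite addrC lerD // distrC ltW.
Qed.

Lemma MVT_bound (F : R -> R) a bb M :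
  a <= bb -> (forall x, a <= x <= bb -> derivable F x 1 /\ `|derive1 F x| <= M) ->
  `|F bb - F a| <= M * (bb - a).
Proof.
move=> ab H.
have [x xab ->] : exists2 x, x \in `[a, bb]%R & F bb - F a = derive1 F x * (bb - a).
  apply: MVT_segment => //.
    move=> x; rewrite in_itv /= => /andP[x1 x2]; rewrite derive1E.
    apply: derivableP; apply: (proj1 (H x _)); by rewrite !ltW.
  apply: derivable_within_continuous => x; rewrite in_itv /= => xx.
  exact: (proj1 (H x xx)).
move: xab; rewrite in_itv /= => xx.
rewrite normrM (ger0_norm (x := bb - a)) ?subr_ge0 // ler_wpM2r ?subr_ge0 //.
exact: (proj2 (H x xx)).
Qed.

Lemma bder_calm (b : R -> R) t0 :
  (forall t : R, t < 0 ->
      [/\ derivable b t 1, derivable (derive1 b) t 1 & {for t, continuous (derive1 (derive1 b))}]) ->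
  t0 < 0 ->
  exists2 d : R, 0 < d & exists2 K : R, 0 <= K & forall t, `|t - t0| < d ->
     t < 0 /\ `|derive1 b t - derive1 b t0| <= K * `|t - t0|.
Proof.
move=> Hb t0n.
have [_ _ c2] := Hb t0 t0n.
have [d d0 Hd] := cont_bound c2.
set d' := Num.min d (- t0 / 2).
have d'0 : 0 < d' by rewrite lt_min d0 /= divr_gt0 // oppr_gt0.
have neg : forall t, `|t - t0| < d' -> t < 0.
  move=> t; rewrite lt_min => /andP[_]; rewrite ltr_norml => /andP[_]; lra.
exists d' => //; exists (`|derive1 (derive1 b) t0| + 1); first by rewrite addr_ge0.
move=> t tt; split; first exact: neg.
have key : forall x y, `|x - t0| < d' -> `|y - t0| < d' -> x <= y ->
    `|derive1 b y - derive1 b x| <= (`|derive1 (derive1 b) t0| + 1) * (y - x).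
  move=> x y hx hy xy; apply: (@MVT_bound (derive1 b) x y _ xy) => w /andP[w1 w2].
  have hw : `|w - t0| < d'.
    move: hx hy; rewrite !ltr_norml => /andP[hx1 hx2] /andP[hy1 hy2].
    apply/andP; split; lra.
  have [_ dw _] := Hb w (neg w hw); split; first exact: dw.
  apply: Hd; rewrite distrC; apply: lt_le_trans hw _; by rewrite ge_min lexx.
have t0b : `|t0 - t0| < d' by rewrite subrr normr0.
case: (leP t0 t) => h.
  by rewrite (ger0_norm (x := t - t0)) ?subr_ge0 //; apply: key.
rewrite distrC (ltr0_norm (x := t - t0)) ?subr_lt0 // opprB; apply: key => //; exact: ltW.
Qed.

End Local1.

Section Local2.
Variables (R : realType) (n : nat).
Local Notation V := 'rV[R]_n.
Implicit Types u v w d z y : V.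

Definition calm (F : V -> V) z r L :=
  forall y, enorm (y - z) < r -> enorm (F y - F z) <= L * enorm (y - z).

Lemma smooth_calm (h : V -> R) z : smooth_LL h ->
  exists2 r : R, 0 < r & exists2 L : R, 0 <= L & calm (grad h) z r L.
Proof.
move=> [_ Hl]; have [r [L [r0 H]]] := Hl z.
exists r => //; exists (Num.max L 0); first by rewrite le_max lexx orbT.
move=> y yr; apply: le_trans (H y z yr _) _; first by rewrite subrr enorm0.
by rewrite ler_wpM2r ?enorm_ge0 // le_max lexx.
Qed.

Lemma calm_mon (F : V -> V) z r L r' : r' <= r -> calm F z r L -> calm F z r' L.
Proof. by move=> rr H y yr; apply: H; apply: lt_le_trans rr. Qed.

Lemma calm_bound (F : V -> V) z r L : 0 <= L -> calm F z r L ->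
  forall y, enorm (y - z) < r -> enorm (F y) <= enorm (F z) + L * r.
Proof.
move=> L0 H y yr; rewrite -(subrK (F z) (F y)) addrC.
apply: le_trans (enormD _ _) _; rewrite lerD2l.
by apply: le_trans (H y yr) _; rewrite ler_wpM2l // ltW.
Qed.

Lemma smooth_lip (h : V -> R) z : smooth_LL h ->
  exists2 r : R, 0 < r & exists2 L : R, 0 <= L &
    [/\ calm (grad h) z r L,
        forall y, enorm (y - z) < r -> `|h y - h z| <= (enorm (grad h z) + L * r) * enorm (y - z)
      & forall y, enorm (y - z) < r ->
          `|h y - h z - dot (grad h z) (y - z)| <= L * enorm (y - z) ^+ 2].
Proof.
move=> sh; have [r r0 [L L0 cH]] := smooth_calm z sh.
have T := taylor1 L0 (fun y _ => sh.1 y) cH.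
exists r => //; exists L => //; split => // y yr.
have e0 := enorm_ge0 (y - z).
have h1 := T y yr.
have h2 := CS (grad h z) (y - z).
have h3 : L * enorm (y - z) ^+ 2 <= L * r * enorm (y - z).
  by rewrite expr2 mulrA ler_wpM2r // ler_wpM2l // ltW.
have h4 := ler_normB (h y - h z) (dot (grad h z) (y - z)).
have h5 : `|h y - h z| <= `|h y - h z - dot (grad h z) (y - z)| + `|dot (grad h z) (y - z)|.
  by rewrite -[X in `|X|](subrK (dot (grad h z) (y - z))) ler_normD.
apply: le_trans h5 _; rewrite mulrDl addrC; apply: lerD => //.
exact: le_trans h1 h3.
Qed.

End Local2.
Section Barrier.
Variables (R : realType) (n m : nat).
Local Notation V := 'rV[R]_n.
Implicit Types u v w d z y : V.
Variables (f : V -> R) (c : 'I_m -> V -> R) (b : R -> R) (mu : R).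
Hypothesis Hf : smooth_LL f.
Hypothesis Hc : forall i, smooth_LL (c i).
Hypothesis Hb : forall t : R, t < 0 ->
      [/\ derivable b t 1, derivable (derive1 b) t 1 & {for t, continuous (derive1 (derive1 b))}].

Lemma term_calm i z : c i z < 0 ->
  exists2 r : R, 0 < r & exists2 K : R, 0 <= K & forall y, enorm (y - z) < r ->
    c i y < 0 /\
    enorm (derive1 b (c i y) *: grad (c i) y - derive1 b (c i z) *: grad (c i) z)
      <= K * enorm (y - z).
Proof.
move=> ciz.
have [rc rc0 [Lc Lc0 [cG cL _]]] := smooth_lip z (Hc i).
have [d d0 [Kb Kb0 Hbd]] := bder_calm Hb ciz.
set Kc := enorm (grad (c i) z) + Lc * rc.
have Kc0 : 0 <= Kc by rewrite addr_ge0 ?enorm_ge0 // mulr_ge0 // ltW.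
exists (Num.min rc (d / (Kc + 1))).
  by rewrite lt_min rc0 /= divr_gt0 // ltr_wpDl.
set B := enorm (grad (c i) z) + Lc * rc.
exists (Kb * Kc * B + `|derive1 b (c i z)| * Lc).
  by rewrite addr_ge0 // ?mulr_ge0 // /B addr_ge0 ?enorm_ge0 // mulr_ge0 // ltW.
move=> y; rewrite lt_min => /andP[yr yd].
set e := enorm (y - z).
have e0 : 0 <= e by exact: enorm_ge0.
have h1 : `|c i y - c i z| <= Kc * e by exact: cL.
have h2 : `|c i y - c i z| < d.
  apply: le_lt_trans h1 _.
  have : Kc * e <= Kc * (d / (Kc + 1)) by rewrite ler_wpM2l // ltW.
  move=> h; apply: le_lt_trans h _.
  rewrite mulrA ltr_pdivrMr ?ltr_wpDl // mulrC ltr_pM2l //; lra.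
have [neg hb] := Hbd _ h2.
split => //.
have -> : derive1 b (c i y) *: grad (c i) y - derive1 b (c i z) *: grad (c i) z =
   (derive1 b (c i y) - derive1 b (c i z)) *: grad (c i) y +
   derive1 b (c i z) *: (grad (c i) y - grad (c i) z).
  by rewrite scalerBl scalerBr addrA subrK.
apply: le_trans (enormD _ _) _; rewrite !enormZ mulrDl.
apply: lerD.
  have g1 := calm_bound Lc0 cG yr.
  apply: le_trans (ler_pM (normr_ge0 _) (enorm_ge0 _) hb g1) _.
  have hB : 0 <= enorm (grad (c i) z) + Lc * rc.
    by rewrite addr_ge0 ?enorm_ge0 // mulr_ge0 // ltW.
  have h := ler_wpM2r hB (ler_wpM2l Kb0 h1).
  apply: le_trans h _; rewrite le_eqVlt; apply/orP; left; apply/eqP.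
  rewrite /B /Kc; ring.
rewrite -mulrA ler_wpM2l //; exact: cG.
Qed.


Lemma sum_calm (s : seq 'I_m) z : strictly_feasible c z ->
  exists2 r : R, 0 < r & exists2 K : R, 0 <= K & forall y, enorm (y - z) < r ->
    (forall i, i \in s -> c i y < 0) /\
    enorm (\sum_(i <- s) (derive1 b (c i y) *: grad (c i) y - derive1 b (c i z) *: grad (c i) z))
      <= K * enorm (y - z).
Proof.
move=> Fz; elim: s => [|i s [r r0 [K K0 IH]]].
  exists 1 => //; exists 0 => // y _; split => //.
  by rewrite big_nil enorm0 mul0r.
have [ri ri0 [Ki Ki0 Hi]] := term_calm (Fz i).
exists (Num.min r ri); first by rewrite lt_min r0 ri0.
exists (Ki + K); first by rewrite addr_ge0.
move=> y; rewrite lt_min => /andP[yr yri].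
have [IH1 IH2] := IH y yr; have [Hi1 Hi2] := Hi y yri.
split.
  by move=> j; rewrite inE => /orP[/eqP ->|/IH1].
rewrite big_cons; apply: le_trans (enormD _ _) _; rewrite mulrDl; exact: lerD.
Qed.

Lemma fmuR_eq : fmuR f c b mu = f + mu *: \sum_(i < m) (b \o c i).
Proof.
apply/funext => y; rewrite /fmuR /=.
by rewrite fct_sumE.
Qed.

Lemma b_diff (t : R) : t < 0 -> differentiable b t.
Proof. move=> tn; have [db _ _] := Hb tn; exact/derivable1_diffP. Qed.

Lemma comp_diff i y : c i y < 0 -> differentiable (b \o c i) y.
Proof.
move=> ciy; apply: differentiable_comp; first exact: (Hc i).1.
exact: b_diff.
Qed.

Lemma comp_derive i y v : c i y < 0 ->
  'D_v (b \o c i) y = derive1 b (c i y) * 'D_v (c i) y.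
Proof.
move=> ciy; have db := b_diff ciy; have dc : differentiable (c i) y by exact: (Hc i).1.
rewrite deriveE; last exact: comp_diff.
rewrite diff_comp //= diff1E //.
by rewrite -deriveE // mulrC.
Qed.

Lemma diff_fmu y : strictly_feasible c y -> differentiable (fmuR f c b mu) y.
Proof.
move=> Fy; rewrite fmuR_eq; apply: differentiableD; first exact: Hf.1.
apply: differentiableZ; apply: differentiable_sum => i; exact: comp_diff.
Qed.

Lemma grad_fmu y : strictly_feasible c y ->
  grad (fmuR f c b mu) y = grad f y + mu *: \sum_(i < m) derive1 b (c i y) *: grad (c i) y.
Proof.
move=> Fy; apply/rowP => k; rewrite /grad !mxE fmuR_eq.
have dS : forall v, derivable (\sum_(i < m) (b \o c i)) y v.
  move=> v; apply: diff_derivable; apply: differentiable_sum => i; exact: comp_diff.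
rewrite deriveD; first last.
- by apply: derivableZ.
- exact/diff_derivable/Hf.1.
rewrite deriveZ // derive_sum; last by move=> i; apply/diff_derivable/comp_diff.
congr (_ + _ * _).
rewrite summxE; apply: eq_bigr => i _; rewrite comp_derive // !mxE //.
Qed.

Lemma fmu_local z : strictly_feasible c z ->
  exists2 r : R, 0 < r & exists2 L : R, 0 <= L &
   [/\ forall y, enorm (y - z) < r -> strictly_feasible c y,
       calm (grad (fmuR f c b mu)) z r L
     & forall y, enorm (y - z) < r -> fmuR f c b mu y <=
          fmuR f c b mu z + dot (grad (fmuR f c b mu) z) (y - z) + L * enorm (y - z) ^+ 2].
Proof.
move=> Fz.
have [rf rf0 [Lf Lf0 cf]] := smooth_calm z Hf.
have [rs rs0 [Ks Ks0 Hs]] := sum_calm (index_enum 'I_m) Fz.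
have r0 : 0 < Num.min rf rs by rewrite lt_min rf0 rs0.
have L0 : 0 <= Lf + `|mu| * Ks by rewrite addr_ge0 // mulr_ge0.
have feas : forall y, enorm (y - z) < Num.min rf rs -> strictly_feasible c y.
  move=> y; rewrite lt_min => /andP[_ /Hs [H _]] i; apply: H; exact: mem_index_enum.
have cal : calm (grad (fmuR f c b mu)) z (Num.min rf rs) (Lf + `|mu| * Ks).
  move=> y yr; have Fy := feas y yr; move: yr; rewrite lt_min => /andP[yf ys].
  rewrite !grad_fmu //.
  have -> : grad f y + mu *: \sum_(i < m) derive1 b (c i y) *: grad (c i) y -
     (grad f z + mu *: \sum_(i < m) derive1 b (c i z) *: grad (c i) z) =
     (grad f y - grad f z) + mu *: \sum_(i < m) (derive1 b (c i y) *: grad (c i) y -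
        derive1 b (c i z) *: grad (c i) z).
    by rewrite sumrB scalerBr opprD addrACA.
  apply: le_trans (enormD _ _) _; rewrite enormZ mulrDl -mulrA.
  apply: lerD; first exact: cf.
  by rewrite ler_wpM2l //; have [_ H] := Hs y ys.
exists (Num.min rf rs) => //; exists (Lf + `|mu| * Ks) => //; split => //.
move=> y yr.
have T := taylor1 L0 (fun y yr => diff_fmu (feas y yr)) cal yr.
have := ler_norm (fmuR f c b mu y - fmuR f c b mu z - dot (grad (fmuR f c b mu) z) (y - z)).
move: T; lra.
Qed.

End Barrier.
Section Arith.
Variable R : realType.
Lemma arith (ga gp e N K0 : R) : 0 < ga -> 0 < gp -> 4 * ga <= gp -> ga <= 1 ->
  0 <= e -> 0 <= N -> e ^+ 2 / (2 * ga) - e ^+ 2 / gp - e * N <= K0 ->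
  e ^+ 2 <= ga * (8 * `|K0| + 16 * N ^+ 2).
Proof.
move=> g0 gp0 ggp g1 e0 N0 H.
have h1 : e ^+ 2 / gp <= e ^+ 2 / (4 * ga).
  rewrite ler_pdivrMr // mulrAC ler_pdivlMr ?mulr_gt0 //.
  by rewrite ler_wpM2l // sqr_ge0.
have h2 : e ^+ 2 / (2 * ga) = 2 * (e ^+ 2 / (4 * ga)) by field; rewrite gt_eqF.
set q := e ^+ 2 / (4 * ga) in h1 h2.
have hq : e ^+ 2 = 4 * ga * q by rewrite /q; field; rewrite gt_eqF.
have hK : q - e * N <= K0 by lra.
have hK2 : 4 * ga * q - 4 * ga * (e * N) <= 4 * ga * K0.
  by rewrite -mulrBr ler_wpM2l // mulr_ge0 // ltW.
rewrite -hq in hK2.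
have sq : 0 <= (e - 4 * ga * N) ^+ 2 by exact: sqr_ge0.
have aK : K0 <= `|K0| := ler_norm _.
have gK : ga * K0 <= ga * `|K0| by rewrite ler_wpM2l // ltW.
have gN : ga * ga * N ^+ 2 <= ga * N ^+ 2.
  have g1' : 0 <= 1 - ga by rewrite subr_ge0.
  have := mulr_ge0 (mulr_ge0 (ltW g0) (sqr_ge0 N)) g1'; nra.
nra.
Qed.
End Arith.
Section ProxStep.
Variables (R : realType) (n : nat).
Local Notation V := 'rV[R]_n.
Implicit Types u v w d z y : V.

Lemma prox_step (g : V -> \bar R) (ga gz : R) z G w : 0 < ga ->
  (forall x, g x != -oo%E) -> g z = gz%:E -> prox g ga (z - ga *: G) w ->
  exists gw : R, g w = gw%:E /\
    gw + enorm (w - z) ^+ 2 / (2 * ga) + dot (w - z) G <= gz.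
Proof.
move=> g0 gN gzE H; have := H z; rewrite gzE.
have e1 : w - (z - ga *: G) = (w - z) + ga *: G by rewrite opprB addrA addrAC.
have e2 : z - (z - ga *: G) = ga *: G by rewrite opprB addrC subrK.
rewrite e1 e2.
case E: (g w) => [gw| |]; last by have := gN w; rewrite E.
- rewrite -EFinD lee_fin => h; exists gw; split => //.
  move: h; rewrite enorm_sqD dotZr !enormZ (ger0_norm (ltW g0)).
  set e := enorm (w - z); set D := dot (w - z) G; set N := enorm G.

  have -> : 1 / (2 * ga) * (e ^+ 2 + 2 * (ga * D) + (ga * N) ^+ 2) =
    e ^+ 2 / (2 * ga) + D + 1 / (2 * ga) * (ga * N) ^+ 2.
    by field; rewrite gt_eqF.
  lra.
- by [].
Qed.
End ProxStep.
Section Key.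
Variables (R : realType) (n m : nat).
Local Notation V := 'rV[R]_n.
Implicit Types u v w d z y : V.
Variables (f : V -> R) (g : V -> \bar R) (c : 'I_m -> V -> R) (b : R -> R) (mu alpha : R).
Hypothesis Hf : smooth_LL f.
Hypothesis Hc : forall i, smooth_LL (c i).
Hypothesis Hb : forall t : R, t < 0 ->
      [/\ derivable b t 1, derivable (derive1 b) t 1 & {for t, continuous (derive1 (derive1 b))}].
Hypothesis gN : forall x, g x != -oo%E.
Variables (gp lb : R).
Hypothesis gp0 : 0 < gp.
Hypothesis Hlb : forall x, (lb%:E <= g x + (1 / (2 * gp) * enorm x ^+ 2)%:E)%E.
Hypothesis Ha : 0 < alpha < 1.

Lemma key z gz : strictly_feasible c z -> g z = gz%:E ->
  exists2 gb : R, 0 < gb & forall ga, 0 < ga -> ga <= gb ->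
    forall w, Tmap f g c b mu ga z w -> accept f g c b mu alpha ga z w.
Proof.
move=> Fz gzE.
have [r r0 [L L0 [feas cal desc]]] := fmu_local mu Hf Hc Hb Fz.
set G := grad (fmuR f c b mu) z.
set N := enorm G.
set Z := enorm z ^+ 2.
set K0 := gz - lb + Z / gp.
set C := 8 * `|K0| + 16 * N ^+ 2 + 1.
have C0 : 0 < C by rewrite /C ltr_pwDr // addr_ge0 // mulr_ge0 // sqr_ge0.
have [a0 a1] := andP Ha.
exists (Num.min (Num.min (gp / 4) 1) (Num.min (r ^+ 2 / (2 * C)) (alpha / (2 * L + 1)))).
  rewrite !lt_min !divr_gt0 ?exprn_gt0 ?mulr_gt0 //.
  by rewrite ltr01.
  by rewrite ltr_pwDr // mulr_ge0.
move=> ga ga0; rewrite !le_min => /andP[/andP[g1 g2] /andP[g3 g4]] w Tw.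
have [gw [gwE P]] := prox_step ga0 gN gzE Tw.
set e := enorm (w - z) in P *.
set D := dot (w - z) G in P.
have e0 : 0 <= e by exact: enorm_ge0.
have N0 : 0 <= N by exact: enorm_ge0.
have lbw : lb <= gw + 1 / (2 * gp) * enorm w ^+ 2.
  by have := Hlb w; rewrite gwE -EFinD lee_fin.
have ew : enorm w <= e + enorm z.
  rewrite -[w](subrK z); apply: le_trans (enormD _ _) _; exact: lexx.
have ew2 : enorm w ^+ 2 <= 2 * e ^+ 2 + 2 * Z.
  have ew0 := enorm_ge0 w; have ez0 := enorm_ge0 z.
  have h1 := ler_pM ew0 ew0 ew ew.
  have h2 := sqr_ge0 (e - enorm z).
  rewrite /Z; nra.
have ew3 : 1 / (2 * gp) * enorm w ^+ 2 <= e ^+ 2 / gp + Z / gp.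
  have -> : e ^+ 2 / gp + Z / gp = 1 / (2 * gp) * (2 * e ^+ 2 + 2 * Z).
    by field; rewrite gt_eqF.
  by rewrite ler_wpM2l // divr_ge0 // mulr_ge0 // ltW.
have cs : - (e * N) <= D.
  have := CS (w - z) G; rewrite -/e -/N -/D => h.
  by have := ler_normlW h; rewrite ler_norml in h; case/andP: h.
have ar : e ^+ 2 / (2 * ga) - e ^+ 2 / gp - e * N <= K0.
  rewrite /K0; lra.
have ga4 : 4 * ga <= gp by rewrite mulrC -ler_pdivlMr.
have esq := arith ga0 gp0 ga4 g2 e0 N0 ar.
have er : e < r.
  rewrite -(ltr_pXn2r (n := 2)) // ?nnegrE ?ltW //.
  apply: le_lt_trans esq _.
  have h1 : ga * (8 * `|K0| + 16 * N ^+ 2) < ga * C by rewrite ltr_pM2l // /C ltrDl.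
  apply: lt_le_trans h1 _.
  move: g3; rewrite ler_pdivlMr ?mulr_gt0 // => h2.
  have : ga * C <= r ^+ 2 / 2.
    rewrite ler_pdivlMr //; move: h2; rewrite mulrA; lra.
  move=> h3; apply: le_trans h3 _; have := sqr_ge0 r; lra.
have Fw := feas w er.
have LL : L <= alpha / (2 * ga).
  rewrite ler_pdivlMr ?mulr_gt0 //.
  move: g4; rewrite ler_pdivlMr ?ltr_pwDr ?mulr_ge0 // => h; nra.
split => //.
- rewrite /qmu /fmu (asboolT Fw) (asboolT Fz) gwE gzE -EFinD -EFinD lee_fin.
  have d1 := desc w er; rewrite -/G -/e (dotC G) -/D in d1.
  have h1 : (1 - alpha) / (2 * ga) * e ^+ 2 = e ^+ 2 / (2 * ga) - alpha / (2 * ga) * e ^+ 2.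
    by field; rewrite gt_eqF.
  have h2 : L * e ^+ 2 <= alpha / (2 * ga) * e ^+ 2 by rewrite ler_wpM2r // sqr_ge0.
  rewrite h1; lra.
- apply: le_trans (cal w er) _; rewrite -/e ler_wpM2r //.
  apply: le_trans LL _; rewrite ler_pdivrMr ?mulr_gt0 // mulrAC ler_pdivlMr //.
  rewrite ler_wpM2l ?ltW //; lra.
Qed.
End Key.
Lemma pow_small (R : realType) (beta eps : R) : 0 < beta < 1 -> 0 < eps ->
  exists k : nat, beta ^+ k <= eps.
Proof.
move=> /andP[b0 b1] e0.
have bn : `|beta| < 1 by rewrite ger0_norm // ltW.
have H := @cvgr0_norm_lt _ _ _ _ _ (fun k : nat => beta ^+ k) (cvg_expr bn) eps e0.
case: (H _) => K _ HK; exists K; have := HK K (leqnn K); rewrite /= ger0_norm; last exact/exprn_ge0/ltW.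
exact: ltW.
Qed.

Lemma inner_ok (R : realType) (n m : nat) (f : 'rV[R]_n -> R) (g : 'rV[R]_n -> \bar R)
  (c : 'I_m -> 'rV[R]_n -> R) (b : R -> R) (mu alpha beta : R) gs z gam' zb :
  inner f g c b mu alpha beta gs z gam' zb -> 0 < beta -> 0 < gs ->
  0 < gam' /\ accept f g c b mu alpha gam' z zb.
Proof.
elim => [ga z' zb' T A | ga z' zb' ga' zb'' T nA _ IH] b0 g0; first by [].
exact: IH b0 (mulr_gt0 b0 g0).
Qed.

Lemma qmu_fin (R : realType) (n m : nat) (f : 'rV[R]_n -> R) (g : 'rV[R]_n -> \bar R)
  (c : 'I_m -> 'rV[R]_n -> R) (b : R -> R) (mu : R) y (r : R) :
  (forall x, g x != -oo%E) -> strictly_feasible c y ->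
  (qmu f g c b mu y <= r%:E)%E ->
  exists gy : R, g y = gy%:E /\ qmu f g c b mu y = (fmuR f c b mu y + gy)%:E.
Proof.
move=> gN Fy; rewrite /qmu /fmu (asboolT Fy).
case E: (g y) => [gy| |]; last by have := gN y; rewrite E.
  by move=> _; exists gy.
by [].
Qed.
Unset Implicit Arguments.
Theorem lemma3p4 (R : realType) (n m : nat)
  (f : 'rV[R]_n -> R) (g : 'rV[R]_n -> \bar R) (c : 'I_m -> 'rV[R]_n -> R)
  (b : R -> R)
  (* standing assumptions on f, g, c *)
  (Hf : smooth_LL f)
  (Hg_proper : (forall x, g x != -oo%E) /\ (exists x, (g x < +oo)%E))
  (Hg_lsc : lower_semicontinuous g)
  (Hg_cont : forall (xk : nat -> 'rV[R]_n) (x : 'rV[R]_n),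
      (forall k, (g (xk k) < +oo)%E) -> xk @ \oo --> x ->
      g (xk k) @[k --> \oo] --> g x)
  (Hc : forall i, smooth_LL (c i))
  (Hinf : ereal_inf [set q f g x | x in [set x | forall i, c i x <= 0]] \is a fin_num)
  (HF : exists x, (q f g x < +oo)%E /\ strictly_feasible c x)
  (* barrier *)
  (Hb_nonneg : forall t : R, t < 0 -> 0 <= b t)
  (Hb_C2 : forall t : R, t < 0 ->
      [/\ derivable b t 1, derivable (derive1 b) t 1 & {for t, continuous (derive1 (derive1 b))}])
  (Hb_incr : forall t : R, t < 0 -> 0 < derive1 b t)
  (Hb_blowup : b t @[t --> 0^'-] --> +oo)
  (* algorithm inputs and parameters *)
  (mu eps alpha beta gamma0 : R) (z0 : 'rV[R]_n)
  (Hmu : 0 < mu) (Heps : 0 < eps)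
  (Hz0 : (q f g z0 < +oo)%E /\ strictly_feasible c z0)
  (Hgamma0 : 0 < gamma0 /\ exists gam' : R, gamma0 < gam' /\
      exists lb : R, forall x, (lb%:E <= g x + (1 / (2 * gam') * enorm x ^+ 2)%:E)%E)
  (Halpha : 0 < alpha < 1) (Hbeta : 0 < beta < 1) :
  forall (N : nat) (z zb : nat -> 'rV[R]_n) (gam : nat -> R),
    ipfb_run f g c b mu eps alpha beta gamma0 z0 N z zb gam ->
    [/\ (* (i) backtracking terminates: no infinite sequence of rejections *)
        (forall j, (j <= N.+1)%N ->
           ~ (exists w : nat -> 'rV[R]_n, forall k : nat,
                Tmap f g c b mu (gstart gamma0 gam j * beta ^+ k) (z j) (w k) /\
                ~ accept f g c b mu alpha (gstart gamma0 gam j * beta ^+ k) (z j) (w k))),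
        (* (ii) sufficient decrease *)
        (forall j, (1 <= j <= N.+1)%N ->
           [/\ z j = zb j.-1,
               qmu f g c b mu (z j) = qmu f g c b mu (zb j.-1)
             & (qmu f g c b mu (zb j.-1) <=
                 qmu f g c b mu (z j.-1)
                 - ((1 - alpha) / (2 * gam j.-1) * enorm (zb j.-1 - z j.-1) ^+ 2)%:E)%E])
      & (* (iii) iterates stay in the initial sublevel set, which is proper *)
        (forall j, (j <= N)%N -> (qmu f g c b mu (zb j) <= qmu f g c b mu z0)%E)
        /\ (qmu f g c b mu z0 < +oo)%E].
Proof.
move=> N z zb gam [Hz0' Hstep Hinner Hstop].
have [gN _] := Hg_proper.
have [g00 [gp [ggp [lb Hlb]]]] := Hgamma0.
have gp0 : 0 < gp by apply: lt_trans ggp.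
have [b0 b1] := andP Hbeta.
have [qz0 Fz0] := Hz0.
have [gz0 gz0E] : exists gz0 : R, g z0 = gz0%:E.
  move: qz0; rewrite /q; case E: (g z0) => [r| |]; first by exists r.
    by [].
  by have := gN z0; rewrite E.
have qmuz0 : qmu f g c b mu z0 = (fmuR f c b mu z0 + gz0)%:E.
  by rewrite /qmu /fmu (asboolT Fz0) gz0E.
pose good j := [/\ strictly_feasible c (z j), (qmu f g c b mu (z j) <= qmu f g c b mu z0)%E
   & 0 < gstart gamma0 gam j].
have good_all : forall j, (j <= N.+1)%N -> good j.
  elim => [_|j IH jN].
    by split; rewrite ?Hz0' //; exact: lexx.
  have jN' : (j <= N)%N by move: jN; rewrite ltnS.
  have [Fj qj gj] := IH (leqW jN').
  have [gj' [Fzb Dec _]] := inner_ok (Hinner j jN') b0 gj.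
  rewrite /good Hstep //; split => //.
  have qj' := qj; rewrite qmuz0 in qj'.
  have [gy [_ E]] := qmu_fin gN Fj qj'.
  apply: le_trans Dec _; apply: le_trans _ qj; rewrite E.
  rewrite -EFinB lee_fin lerBlDr lerDl; apply: mulr_ge0; last exact: sqr_ge0.
  by apply: divr_ge0; [rewrite subr_ge0; case/andP: Halpha => _ /ltW|rewrite mulr_ge0 // ltW].
split.
- move=> j jN [w Hw].
  have [Fj qj gj] := good_all j jN.
  rewrite qmuz0 in qj.
  have [gy [gyE _]] := qmu_fin gN Fj qj.
  have [gb gb0 Hk] := key mu Hf Hc Hb_C2 gN gp0 Hlb Halpha Fj gyE.
  have [k hk] := pow_small Hbeta (divr_gt0 gb0 gj).
  have [T nA] := Hw k; apply: nA; apply: Hk T.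
    by rewrite mulr_gt0 // exprn_gt0.
  by rewrite mulrC -ler_pdivlMr.
- move=> j /andP[j1 jN].
  have jN' : (j.-1 <= N)%N by rewrite -ltnS prednK.
  have [Fj qj gj] := good_all j.-1 (leqW jN').
  have [_ [_ Dec _]] := inner_ok (Hinner j.-1 jN') b0 gj.
  have zj : z j = zb j.-1 by rewrite -Hstep // prednK.
  by split => //; rewrite zj.
- split; last by rewrite qmuz0 ltry.
  move=> j jN; have [_ qj _] := good_all j.+1 jN.
  by rewrite Hstep in qj.
Qed.
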